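(* Let $A$ be a commutative ring and $\sigma$ a hereditary torsion theory on $A$-modules. If $A$ is totally $\sigma$-artinian, then $\sigma$ is of finite type.
   Context: All rings are commutative with identity. $\mathcal{L}(\sigma)$ denotes the Gabriel filter of $\sigma$ (ideals $\mathfrak{h}$ with $A/\mathfrak{h}$ $\sigma$-torsion). $A$ is totally $\sigma$-artinian if for every descending chain of ideals $\mathfrak{a}_1\supseteq\mathfrak{a}_2\supseteq\cdots$ there exist an index $m$ and $\mathfrak{h}\in\mathcal{L}(\sigma)$ with $\mathfrak{a}_m\mathfrak{h}\subseteq\mathfrak{a}_s$ for all $s\ge m$. $\sigma$ is of finite type if $\mathcal{L}(\sigma)$ has a filter basis consisting of finitely generated ideals (every ideal in $\mathcal{L}(\sigma)$ contains a finitely generated ideal in $\mathcal{L}(\sigma)$). *)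

(* Defs.v *)
From mathcomp Require Import all_boot all_algebra.
Set Implicit Arguments. Unset Strict Implicit. Unset Printing Implicit Defensive.
Import GRing.Theory.
Local Open Scope ring_scope.

Section Ideals.
Variable A : comPzRingType.

Definition is_ideal (I : A -> Prop) : Prop :=
  [/\ I 0, (forall x y, I x -> I y -> I (x + y)) & (forall a x, I x -> I (a * x))].

Definition ideal_sub (I J : A -> Prop) : Prop := forall x, I x -> J x.

Definition ideal_prod (I J : A -> Prop) : A -> Prop :=
  fun z => exists n (x y : 'I_n -> A),
    (forall i, I (x i) /\ J (y i)) /\ z = \sum_(i < n) x i * y i.

Definition ideal_colon (I : A -> Prop) (a : A) : A -> Prop := fun x => I (a * x).

Definition ideal_cap (I J : A -> Prop) : A -> Prop := fun x => I x /\ J x.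

Definition fin_gen (I : A -> Prop) : Prop :=
  exists n (g : 'I_n -> A),
    forall z, I z <-> exists c : 'I_n -> A, z = \sum_(i < n) c i * g i.

(* Gabriel filter (Stenstrom, Ch. VI): the filter L(sigma) of a hereditary
   torsion theory sigma on A-modules. *)
Definition gabriel_filter (F : (A -> Prop) -> Prop) : Prop :=
  [/\ (forall I, F I -> is_ideal I),
      F (fun _ => True),
      (forall I J, F I -> is_ideal J -> ideal_sub I J -> F J),
      (forall I J, F I -> F J -> F (ideal_cap I J)) &
      ((forall I a, F I -> F (ideal_colon I a)) /\
      (forall I J, F I -> is_ideal J ->
          (forall a, I a -> F (ideal_colon J a)) -> F J))].

Definition totally_artinian (F : (A -> Prop) -> Prop) : Prop :=
  forall a : nat -> (A -> Prop),
    (forall n, is_ideal (a n)) ->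
    (forall n, ideal_sub (a n.+1) (a n)) ->
    exists m, exists h, F h /\
      forall s, (m <= s)%N -> ideal_sub (ideal_prod (a m) h) (a s).

Definition finite_type (F : (A -> Prop) -> Prop) : Prop :=
  forall I, F I -> exists J, [/\ F J, fin_gen J & ideal_sub J I].

End Ideals.

(* Main.v *)
Require Import Defs.
From mathcomp Require Import all_boot all_algebra.
From mathcomp Require Import ring.
From Stdlib Require Import Classical IndefiniteDescription.
Set Implicit Arguments. Unset Strict Implicit. Unset Printing Implicit Defensive.
Import GRing.Theory.

Section Proof.
Local Open Scope ring_scope.
Variable A : comPzRingType.
Variable F : (A -> Prop) -> Prop.
Hypothesis gF : gabriel_filter F.

Definition colon2 (b a : A -> Prop) : A -> Prop := fun z => forall x, a x -> b (x * z).
Definition addI (t : A) (J : A -> Prop) : A -> Prop :=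
  fun z => exists a w, J w /\ z = t * a + w.

Lemma F_up (I J : A -> Prop) : F I -> is_ideal J -> ideal_sub I J -> F J.
Proof. by case: gF => _ _ H _ _; apply: H. Qed.
Lemma F_full : F (fun _ => True).
Proof. by case: gF. Qed.
Lemma F_trans (I J : A -> Prop) : F I -> is_ideal J ->
  (forall a, I a -> F (ideal_colon J a)) -> F J.
Proof. by case: gF => _ _ _ _ [_ H]; apply: H. Qed.
Lemma F_cap (I J : A -> Prop) : F I -> F J -> F (ideal_cap I J).
Proof. by case: gF => _ _ _ H _; apply: H. Qed.

Lemma F_of_full (J : A -> Prop) : is_ideal J -> (forall x, J x) -> F J.
Proof. move=> iJ H; apply: (F_up F_full iJ) => x _; exact: H. Qed.

Lemma colon2_ideal (b a : A -> Prop) : is_ideal b -> is_ideal (colon2 b a).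
Proof.
case=> b0 bD bM; split.
- by move=> x _; rewrite mulr0.
- by move=> x y Hx Hy z az; rewrite mulrDr; apply: bD; [apply: Hx | apply: Hy].
- by move=> c x Hx z az; rewrite mulrCA; apply: bM; apply: Hx.
Qed.

Lemma colon_ideal (J : A -> Prop) (a : A) : is_ideal J -> is_ideal (ideal_colon J a).
Proof.
case=> b0 bD bM; split; rewrite /ideal_colon.
- by rewrite mulr0.
- by move=> x y Hx Hy; rewrite mulrDr; apply: bD.
- by move=> c x Hx; rewrite mulrCA; apply: bM.
Qed.

Lemma addI_ideal (t : A) (J : A -> Prop) : is_ideal J -> is_ideal (addI t J).
Proof.
case=> b0 bD bM; split.
- by exists 0, 0; split => //; rewrite mulr0 addr0.
- move=> x y [a1 [w1 [H1 ->]]] [a2 [w2 [H2 ->]]].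
  exists (a1 + a2), (w1 + w2); split; first exact: bD.
  ring.
- move=> c x [a1 [w1 [H1 ->]]]; exists (c * a1), (c * w1); split; first exact: bM.
  ring.
Qed.

Lemma cap_ideal (I J : A -> Prop) : is_ideal I -> is_ideal J -> is_ideal (fun x => I x /\ J x).
Proof.
case=> a0 aD aM [b0 bD bM]; split => //.
- by move=> x y [? ?] [? ?]; split; [apply: aD | apply: bD].
- by move=> c x [? ?]; split; [apply: aM | apply: bM].
Qed.

Lemma smp (S : (A -> Prop) -> Prop) (a0 : A -> Prop) :
  totally_artinian F -> (forall b, S b -> is_ideal b) -> S a0 ->
  exists a, S a /\ forall b, S b -> ideal_sub b a -> F (colon2 b a).
Proof.
move=> tA Sid Sa0; apply: NNPP => Hn.
have H : forall a : {a | S a}, exists b, S b /\ ideal_sub b (proj1_sig a)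
          /\ ~ F (colon2 b (proj1_sig a)).
  move=> [a Sa] /=; apply: NNPP => Hb; apply: Hn; exists a; split => //.
  move=> b Sb sub; apply: NNPP => nF; apply: Hb; by exists b.
pose step (a : {a | S a}) : {a | S a} :=
  let s := constructive_indefinite_description _ (H a) in
  exist _ (proj1_sig s) (proj1 (proj2_sig s)).
have stepP a : ideal_sub (proj1_sig (step a)) (proj1_sig a) /\
   ~ F (colon2 (proj1_sig (step a)) (proj1_sig a)).
  rewrite /step; exact: (proj2 (proj2_sig (constructive_indefinite_description _ (H a)))).
pose sq := fix sq n := match n with 0%N => exist _ a0 Sa0 | n'.+1 => step (sq n') end.
pose ch n := proj1_sig (sq n).
have [m [h [Fh Hs]]] := tA ch (fun n => Sid _ (proj2_sig (sq n)))
  (fun n => proj1 (stepP (sq n))).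
have := proj2 (stepP (sq m)); apply.
apply: (F_up Fh (colon2_ideal _ (Sid _ (proj2_sig (sq m.+1))))).
move=> z hz x ax; apply: (Hs m.+1 (leqnSn m)).
exists 1%N, (fun _ => x), (fun _ => z); split => //.
by rewrite big_ord1.
Qed.

Definition Pr (P : A -> Prop) := [/\ is_ideal P, ~ F P & forall t, ~ P t -> F (addI t P)].

Lemma crit (K : A -> Prop) : totally_artinian F -> is_ideal K -> ~ F K -> exists P, Pr P /\ ideal_sub K P.
Proof.
move=> tA iK nFK; have [k0 kD kM] := iK.
pose S b := exists y, ~ F (ideal_colon K y) /\ b = addI y K.
have Sid b : S b -> is_ideal b by move=> [y [_ ->]]; exact: addI_ideal.
have S1 : S (addI 1 K).
  exists 1; split => // Hc; apply: nFK; apply: (F_up Hc iK) => x.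
  by rewrite /ideal_colon mul1r.
have [a [[y [nFy ->]] Hmin]] := smp tA Sid S1.
pose P w := F (ideal_colon K (y * w)).
have full_P w : K (y * w) -> P w.
  move=> Kw; apply: F_of_full; first exact: colon_ideal.
  by move=> x; rewrite /ideal_colon mulrC; apply: kM.
have iP : is_ideal P.
  split.
  - by apply: full_P; rewrite mulr0.
  - move=> x1 x2 H1 H2; apply: (F_up (F_cap H1 H2)); first exact: colon_ideal.
    move=> z [h1 h2]; rewrite /ideal_colon mulrDr mulrDl; exact: kD.
  - move=> c x Hx; apply: (F_up Hx); first exact: colon_ideal.
    move=> z hz; rewrite /ideal_colon.
    have -> : y * (c * x) * z = c * (y * x * z) by ring.
    exact: kM.
exists P; split; last first.
  by move=> k Kk; apply: full_P; apply: kM.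
split => //.
- move=> FP; apply: nFy; apply: (F_trans FP); first exact: colon_ideal.
  move=> w Pw; apply: (F_up Pw); first by do 2 apply: colon_ideal.
  by move=> z; rewrite /ideal_colon mulrA.
- move=> t nPt.
  have Syt : S (addI (y * t) K) by exists (y * t).
  have sub : ideal_sub (addI (y * t) K) (addI y K).
    move=> z [a1 [w [Kw ->]]]; exists (t * a1), w; split => //; by rewrite mulrA.
  have := Hmin _ Syt sub => Hc.
  apply: (F_up Hc); first exact: addI_ideal.
  move=> z Hz.
  have [a1 [w [Kw Hw]]] : addI (y * t) K (y * z).
    apply: Hz; exists 1, 0; split => //; by rewrite mulr1 addr0.
  exists a1, (z - t * a1); split; last by rewrite addrC subrK.
  apply: full_P.
  have -> : y * (z - t * a1) = w by rewrite mulrDr Hw; ring.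
  done.
Qed.

Fixpoint good (I : A -> Prop) (l : seq ((A -> Prop) * A)) : Prop :=
  match l with
  | [::] => True
  | (P, t) :: l' => [/\ Pr P, I t, ~ P t & good I l']
  end.
Fixpoint Qf (l : seq ((A -> Prop) * A)) : A -> Prop :=
  match l with
  | [::] => fun _ => True
  | (P, t) :: l' => fun x => P x /\ Qf l' x
  end.
Fixpoint gen (l : seq ((A -> Prop) * A)) : A -> Prop :=
  match l with
  | [::] => fun z => z = 0
  | (P, t) :: l' => addI t (gen l')
  end.

Lemma Qf_ideal (I : A -> Prop) l : good I l -> is_ideal (Qf l).
Proof.
elim: l => [|[P t] l IH] /=.
  by move=> _; split.
by move=> [[iP _ _] _ _ /IH]; apply: cap_ideal.
Qed.

Lemma gen_ideal l : is_ideal (gen l).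
Proof.
elim: l => [|[P t] l IH] /=; last exact: addI_ideal.
split => //.
- by move=> x y -> ->; rewrite addr0.
- by move=> c x ->; rewrite mulr0.
Qed.

Lemma gen_sub (I : A -> Prop) l : is_ideal I -> good I l -> ideal_sub (gen l) I.
Proof.
move=> iI; have [i0 iD iM] := iI.
elim: l => [|[P t] l IH] /=.
  by move=> _ z ->.
move=> [_ It _ /IH H] z [a [w [Hw ->]]]; apply: iD; last exact: H.
by rewrite mulrC; apply: iM.
Qed.

Lemma fin_gen_addI (t : A) (J : A -> Prop) : fin_gen J -> fin_gen (addI t J).
Proof.
move=> [n [g Hg]].
exists n.+1, (fun i => if unlift ord0 i is Some j then g j else t) => z; split.
- move=> [a [w [Jw ->]]]; have [c Hc] := (proj1 (Hg w)) Jw.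
  exists (fun i => if unlift ord0 i is Some j then c j else a).
  rewrite big_ord_recl /= unlift_none Hc mulrC; congr (_ + _).
  by apply: eq_bigr => i _; rewrite liftK.
- move=> [c ->]; rewrite big_ord_recl unlift_none.
  exists (c ord0), (\sum_(i < n) c (lift ord0 i) * g i); split.
    by apply/(proj2 (Hg _)); exists (fun i => c (lift ord0 i)).
  rewrite mulrC; congr (_ + _); apply: eq_bigr => i _; by rewrite liftK.
Qed.

Lemma gen_fin l : fin_gen (gen l).
Proof.
elim: l => [|[P t] l IH] /=; last exact: fin_gen_addI.
exists 0%N, (fun _ => 0) => z; split.
- by move=> ->; exists (fun _ => 0); rewrite big_ord0.
- by move=> [c ->]; rewrite big_ord0.
Qed.

Lemma step_lemma (P Pi : A -> Prop) (ti : A) (Q' : A -> Prop) : is_ideal P -> is_ideal Pi -> is_ideal Q' ->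
  P ti -> F (addI ti Pi) -> F (colon2 P (fun x => Pi x /\ Q' x)) -> F (colon2 P Q').
Proof.
move=> iP iPi iQ Pt Fa FY; have [p0 pD pM] := iP; have [_ _ piM] := iPi.
have [_ _ qM] := iQ.
apply: (F_trans FY); first exact: colon2_ideal.
move=> z Yz; apply: (F_up Fa); first by apply: colon_ideal; exact: colon2_ideal.
move=> w [a [p [Pp ->]]] q Qq.
have -> : q * (z * (ti * a + p)) = (q * z * a) * ti + (q * p) * z by ring.
apply: pD; first exact: pM.
apply: Yz; split; first exact: piM.
by rewrite mulrC; apply: qM.
Qed.

Lemma ind_lemma (I P : A -> Prop) l : is_ideal P -> good I l -> ideal_sub (gen l) P ->
  forall Q', is_ideal Q' -> F (colon2 P (fun x => Qf l x /\ Q' x)) -> F (colon2 P Q').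
Proof.
move=> iP; have [p0 pD pM] := iP.
elim: l => [|[Pi ti] l IH] /=.
  move=> _ _ Q' iQ H; apply: (F_up H); first exact: colon2_ideal.
  by move=> z Hz x Qx; apply: Hz.
move=> [[iPi nFPi crPi] It nPt gl] sub Q' iQ H.
have Pti : P ti by apply: sub; exists 1, 0; split; [by case: (gen_ideal l) | by rewrite mulr1 addr0].
have sub' : ideal_sub (gen l) P.
  by move=> w gw; apply: sub; exists 0, w; split => //; rewrite mulr0 add0r.
have H1 : F (colon2 P (fun x => Pi x /\ Q' x)).
  apply: (IH gl sub' _ (cap_ideal iPi iQ)).
  apply: (F_up H); first exact: colon2_ideal.
  by move=> z Hz x [Qx [Px Q'x]]; apply: Hz.
exact: (step_lemma iP iPi iQ Pti (crPi _ nPt) H1).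
Qed.

Theorem main_aux : totally_artinian F -> finite_type F.
Proof.
move=> tA I FI.
have iI : is_ideal I by case: gF => H _ _ _ _; apply: H.
pose S b := exists l, good I l /\ b = Qf l.
have Sid b : S b -> is_ideal b by move=> [l [gl ->]]; exact: Qf_ideal gl.
have S0 : S (fun _ => True) by exists [::].
have [a [[l0 [gl0 ->]] Hmin]] := smp tA Sid S0.
exists (gen l0); split; [|exact: gen_fin|exact: gen_sub].
apply: NNPP => nF.
have [P [[iP nFP crP] subP]] := crit tA (gen_ideal l0) nF.
have [t [It nPt]] : exists t, I t /\ ~ P t.
  apply: NNPP => Hc; apply: nFP; apply: (F_up FI iP) => x Ix.
  by apply: NNPP => nPx; apply: Hc; exists x.
have gl' : good I ((P, t) :: l0) by [].
have := Hmin _ (ex_intro _ _ (conj gl' erefl)) (fun x Hx => proj2 Hx) => /= Hc.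
have H2 : F (colon2 P (fun x => Qf l0 x /\ True)).
  apply: (F_up Hc); first exact: colon2_ideal.
  by move=> z Hz x [Qx _]; case: (Hz x Qx).
have := ind_lemma iP gl0 subP (Q' := fun _ => True) _ H2.
have iT : is_ideal (fun _ : A => True) by split.
move=> /(_ iT) HF; apply: nFP; apply: (F_up HF iP) => z Hz.
by have := Hz 1 Logic.I; rewrite mul1r.
Qed.

End Proof.

Theorem mainTheorem2 (A : comPzRingType) (F : (A -> Prop) -> Prop) :
  gabriel_filter F -> totally_artinian F -> finite_type F.
Proof. move=> gF; exact: main_aux gF. Qed.
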